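(* Let $(M,\cdot)$ be a moving semigroup. Then a set $A\subseteq M$ is IIP if and only if it is DIP.
   Context: $\beta M$ is the Stone–Čech compactification of the discrete semigroup $M$ with the usual extended operation; $(M,\cdot)$ is moving if $\beta M\setminus M$ is a subsemigroup of $\beta M$. For a sequence $(x_n)$ in $M$, $\mathrm{FP}(x_n)=\{x_{i_1}\cdots x_{i_k}: k\ge1,\ i_1<\cdots<i_k\}$. A set $A\subseteq M$ is IIP if there is a sequence $(x_n)$ in $M$ with $\mathrm{FP}(x_n)\subseteq A$ and $\mathrm{FP}(x_n)$ infinite. $A$ is DIP if there is an injective sequence $(x_n)$ in $M$ with $\mathrm{FP}(x_n)\subseteq A$. *)

(* Defs.v *)
(* Stone-Cech compactification of a discrete semigroup modelled
   as the set of ultrafilters on M, with the usual (right-topological)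
   extension of the operation:
     p . q = { A | { x | { y | x y in A } in q } in p }.
   Points of M are the principal ultrafilters, so beta M \ M is the set of
   non-principal ultrafilters. *)
From Stdlib Require Import List Sorting.Sorted Arith.
Import ListNotations.

Definition is_ultrafilter {M : Type} (U : (M -> Prop) -> Prop) : Prop :=
  (~ U (fun _ => False)) /\
  U (fun _ => True) /\
  (forall A B : M -> Prop, U A -> (forall x, A x -> B x) -> U B) /\
  (forall A B : M -> Prop, U A -> U B -> U (fun x => A x /\ B x)) /\
  (forall A : M -> Prop, U A \/ U (fun x => ~ A x)).

Definition is_principal {M : Type} (U : (M -> Prop) -> Prop) : Prop :=
  exists a : M, forall A : M -> Prop, U A <-> A a.

Definition ult_mul {M : Type} (op : M -> M -> M) (p q : (M -> Prop) -> Prop)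
  : (M -> Prop) -> Prop :=
  fun A => p (fun x => q (fun y => A (op x y))).

Definition is_semigroup {M : Type} (op : M -> M -> M) : Prop :=
  forall x y z, op x (op y z) = op (op x y) z.

Definition moving {M : Type} (op : M -> M -> M) : Prop :=
  forall p q, is_ultrafilter p -> is_ultrafilter q ->
    ~ is_principal p -> ~ is_principal q -> ~ is_principal (ult_mul op p q).

Definition FP {M : Type} (op : M -> M -> M) (x : nat -> M) (y : M) : Prop :=
  exists (i : nat) (l : list nat),
    StronglySorted lt (i :: l) /\
    y = fold_left (fun acc j => op acc (x j)) l (x i).

Definition infinite_set {M : Type} (S : M -> Prop) : Prop :=
  ~ exists l : list M, forall y, S y -> In y l.

Definition IIP {M : Type} (op : M -> M -> M) (A : M -> Prop) : Prop :=
  exists x : nat -> M,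
    (forall y, FP op x y -> A y) /\ infinite_set (FP op x).

Definition DIP {M : Type} (op : M -> M -> M) (A : M -> Prop) : Prop :=
  exists x : nat -> M,
    (forall n m, x n = x m -> n = m) /\ (forall y, FP op x y -> A y).

(* Main.v *)
Require Import Defs.
From Stdlib Require Import List Sorting.Sorted Arith Lia Classical ClassicalEpsilon.
Import ListNotations.

Section Aux.
Variable M : Type.
Variable op : M -> M -> M.
Hypothesis Hsg : is_semigroup op.
Variable x : nat -> M.

Definition fx (l : list nat) (a : M) := fold_left (fun acc j => op acc (x j)) l a.

Lemma fx_assoc : forall l a b, fx l (op a b) = op a (fx l b).
Proof.
  induction l as [|j l IH]; intros a b; simpl; [reflexivity|].
  unfold fx in *; simpl. rewrite <- Hsg. apply IH.
Qed.

Definition Sb (N K : nat) (y : M) : Prop :=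
  exists i l, StronglySorted lt (i :: l) /\ N <= i /\ Forall (fun j => j < K) (i :: l)
    /\ y = fx l (x i).

Definition T (N : nat) (y : M) : Prop := exists K, Sb N K y.

Lemma SS_app : forall (l1 l2 : list nat), StronglySorted lt l1 -> StronglySorted lt l2 ->
  (forall a b, In a l1 -> In b l2 -> a < b) -> StronglySorted lt (l1 ++ l2).
Proof.
  induction l1 as [|a l1 IH]; intros l2 H1 H2 H; simpl; [exact H2|].
  apply StronglySorted_inv in H1 as [H1a H1b].
  constructor.
  - apply IH; auto. intros u v Hu Hv. apply H; simpl; auto.
  - apply Forall_app; split; [exact H1b|].
    apply Forall_forall. intros v Hv. apply H; simpl; auto.
Qed.

Lemma concat : forall N K a b, Sb N K a -> T K b -> T N (op a b).
Proof.
  intros N K a b [i [l [Hs [Hi [Hf Ha]]]]] [K' [j [m [Hs' [Hj [Hf' Hb]]]]]].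
  exists K'. exists i, (l ++ j :: m). split; [|split; [exact Hi|split]].
  - change (StronglySorted lt ((i :: l) ++ j :: m)). apply SS_app; auto.
    intros u v Hu Hv. rewrite Forall_forall in Hf. specialize (Hf u Hu).
    destruct Hv as [<-|Hv]; [lia|].
    apply StronglySorted_inv in Hs' as [_ Hs']. rewrite Forall_forall in Hs'.
    specialize (Hs' v Hv). lia.
  - change (Forall (fun j0 => j0 < K') ((i :: l) ++ j :: m)). apply Forall_app. split; auto.
    rewrite Forall_forall in *. intros u Hu. specialize (Hf u Hu).
    assert (j < K') by (apply Hf'; simpl; auto). lia.
  - subst. unfold fx. rewrite fold_left_app. simpl. fold (fx m (op (fx l (x i)) (x j))).
    rewrite fx_assoc. reflexivity.
Qed.

Lemma T_mono : forall N N' y, N' <= N -> T N y -> T N' y.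
Proof.
  intros N N' y H [K [i [l [A [B [C D]]]]]]. exists K, i, l. repeat split; auto. lia.
Qed.

Lemma FP_T : forall y, FP op x y -> T 0 y.
Proof.
  intros y [i [l [Hs Hy]]]. exists (S (list_max (i :: l))), i, l.
  repeat split; auto; try lia.
  apply Forall_forall. intros u Hu.
  assert (Forall (fun k => k <= list_max (i::l)) (i::l)) as HF
   by (apply list_max_le; lia).
  rewrite Forall_forall in HF. specialize (HF u Hu). lia.
Qed.

Lemma T_FP : forall y, T 0 y -> FP op x y.
Proof. intros y [K [i [l [A [B [C D]]]]]]. exists i, l. auto. Qed.

Lemma T_step : forall N L, (forall y, T (S N) y -> In y L) ->
  forall y, T N y -> In y (x N :: L ++ map (op (x N)) L).
Proof.
  intros N L HL y [K [i [l [Hs [Hi [Hf Hy]]]]]].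
  destruct (Nat.eq_dec i N) as [->|Hne].
  - destruct l as [|j m].
    + simpl in Hy. left; auto.
    + right. apply in_or_app. right.
      unfold fx in Hy; simpl in Hy. fold (fx m (op (x N) (x j))) in Hy.
      rewrite fx_assoc in Hy. subst y. apply in_map. apply HL.
      apply StronglySorted_inv in Hs as [Hs1 Hs2]. inversion Hs2; subst.
      exists K, j, m. repeat split; auto. inversion Hf; auto.
  - right. apply in_or_app. left. apply HL. exists K, i, l. repeat split; auto. lia.
Qed.

Lemma T_inf : infinite_set (FP op x) -> forall N, infinite_set (T N).
Proof.
  intros H N. induction N as [|N IH].
  - intros [L HL]. apply H. exists L. intros y Hy. apply HL, FP_T, Hy.
  - intros [L HL]. apply IH. eexists. apply T_step. exact HL.
Qed.

Lemma pick : forall N (vs : list M), infinite_set (T N) ->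
  exists p : nat * M, Sb N (fst p) (snd p) /\ ~ In (snd p) vs.
Proof.
  intros N vs H. apply NNPP. intro C. apply H. exists vs. intros y [K HK].
  apply NNPP. intro Hn. apply C. exists (K, y). simpl. auto.
Qed.

End Aux.

Theorem mainTheorem4 (M : Type) (op : M -> M -> M)
  (Hsg : is_semigroup op) (Hmov : moving op) (A : M -> Prop) :
  IIP op A <-> DIP op A.
Proof.
  split.
  - intros [x [HA Hinf]].
    pose proof (T_inf M op Hsg x Hinf) as HT.
    set (pickf := fun N vs => proj1_sig (constructive_indefinite_description _
                    (pick M op x N vs (HT N)))).
    assert (Hp : forall N vs, Sb M op x N (fst (pickf N vs)) (snd (pickf N vs))
                   /\ ~ In (snd (pickf N vs)) vs).
    { intros N vs. unfold pickf. apply proj2_sig. }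
    clearbody pickf.
    set (st := fix st (n : nat) : nat * list M :=
           match n with
           | 0 => (0, [])
           | S n => let p := pickf (fst (st n)) (snd (st n)) in
                    (fst p, snd p :: snd (st n))
           end).
    set (y := fun n => snd (pickf (fst (st n)) (snd (st n)))).
    assert (HS : forall n, Sb M op x (fst (st n)) (fst (st (S n))) (y n)).
    { intro n. apply Hp. }
    assert (Hlt : forall n, fst (st n) < fst (st (S n))).
    { intro n. destruct (HS n) as [i [l [_ [B [C _]]]]]. inversion C; subst. lia. }
    assert (Hmono : forall n m, n <= m -> fst (st n) <= fst (st m)).
    { intros n m H. induction H; auto. specialize (Hlt m). lia. }
    assert (Hin : forall n m, m < n -> In (y m) (snd (st n))).
    { intros n. induction n as [|n IH]; intros m Hm; [lia|].
      simpl. destruct (Nat.eq_dec m n) as [->|Hne]; [left; reflexivity|].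
      right. apply IH. lia. }
    exists y. split.
    + intros n m E. destruct (Nat.lt_total n m) as [H|[H|H]]; auto.
      * exfalso. apply (proj2 (Hp (fst (st m)) (snd (st m)))).
        fold (y m). rewrite <- E. apply Hin; auto.
      * exfalso. apply (proj2 (Hp (fst (st n)) (snd (st n)))).
        fold (y n). rewrite E. apply Hin; auto.
    + intros z [i [l [Hs Hz]]]. apply HA. apply (T_FP M op x).
      apply (T_mono M op x (fst (st i))); [lia|].
      subst z. revert i Hs. induction l as [|j m IH]; intros i Hs.
      * simpl. exists (fst (st (S i))). apply HS.
      * simpl.
        change (T M op x (fst (st i))
           (fx M op y m (op (y i) (y j)))).
        rewrite fx_assoc by exact Hsg.
        apply StronglySorted_inv in Hs as [Hs1 Hs2]. inversion Hs2; subst.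
        apply (concat M op Hsg x _ (fst (st (S i)))); [apply HS|].
        apply (T_mono M op x (fst (st j))); [apply Hmono; lia|].
        apply IH. auto.
  - intros [x [Hinj HA]]. exists x. split; auto.
    intros [L HL].
    assert (forall n, In (x n) L) as Hx.
    { intro n. apply HL. exists n, []. split; [repeat constructor|reflexivity]. }
    assert (forall k, k <= length L) as Hk.
    { intros k. pose proof (NoDup_incl_length (l := map x (seq 0 (S k))) (l' := L)) as Hn.
      rewrite map_length, seq_length in Hn.
      assert (S k <= length L); [|lia]. apply Hn.
      - apply NoDup_map_NoDup_ForallPairs; [|apply seq_NoDup]. intros a b _ _ E; apply Hinj; auto.
      - intros z Hz. apply in_map_iff in Hz as [n [<- _]]. apply Hx. }
    specialize (Hk (S (length L))). lia.
Qed.
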